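(* Let $(M,d)$ be a compact metric space and $\varphi:M\to M$ continuous, and assume either (C) there is a homeomorphism $\theta$ of $M$ with $\theta\circ\theta=\mathrm{Id}_M$ and $\varphi=\theta\circ\varphi\circ\theta$ (set $\theta_n=\theta$), or (R) $\varphi$ is a homeomorphism and there is a homeomorphism $\theta$ with $\theta\circ\theta=\mathrm{Id}_M$ and $\varphi^{-1}=\theta\circ\varphi\circ\theta$ (set $\theta_n=\theta\circ\varphi^{n-1}$). If $\mathcal G=\{G_n\}$ is asymptotically additive with approximating sequence $\{G^{(k)}\}$, then $\mathcal G\circ\theta:=\{G_n\circ\theta_n\}$ is asymptotically additive with approximating sequence $\{G^{(k)}\circ\theta\}$.
   Context: $C(M),B(M)$: continuous/bounded Borel real functions with sup norm; $S_nG=\sum_{k<n}G\circ\varphi^k$. $\mathcal G=\{G_n\}\subset B(M)$ is asymptotically additive with approximating sequence $\{G^{(k)}\}\subset C(M)$ if $\lim_k\limsup_nn^{-1}\|G_n-S_nG^{(k)}\|_\infty=0$. *)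

(* Defs.v *)
From HB Require Import structures.
From mathcomp Require Import all_boot all_order all_algebra.
From mathcomp Require Import all_classical all_reals all_analysis.
Set Implicit Arguments. Unset Strict Implicit. Unset Printing Implicit Defensive.
Import Order.TTheory GRing.Theory Num.Theory.
Import numFieldNormedType.Exports.
Local Open Scope classical_set_scope.
Local Open Scope ring_scope.

Definition borel_set {T : topologicalType} (A : set T) : Prop := <<s open >> A.

Definition borel_fun {R : realType} {T : topologicalType} (f : T -> R) : Prop :=
  forall A : set R, measurable A -> borel_set (f @^-1` A).

Definition bounded_borel {R : realType} {T : topologicalType} (f : T -> R) : Prop :=
  borel_fun f /\ exists c : R, forall x, `|f x| <= c.

Definition supnorm {R : realType} {T : Type} (f : T -> R) : R :=
  sup (range (fun x => `|f x|)).

Definition birk {R : realType} {T : Type} (phi : T -> T) (g : T -> R) (n : nat)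
  : T -> R := fun x => \sum_(k < n) g (iter k phi x).

Definition homeomorphism {T : topologicalType} (f : T -> T) : Prop :=
  continuous f /\ exists g : T -> T, continuous g /\ cancel f g /\ cancel g f.

(* {G_n} (indexed by n : nat; the index 0 is irrelevant) is asymptotically
   additive with approximating sequence {Gk k} *)
Definition asymp_additive {R : realType} {T : topologicalType} (phi : T -> T)
  (G : nat -> T -> R) (Gk : nat -> T -> R) : Prop :=
  (forall n, bounded_borel (G n)) /\ (forall k, continuous (Gk k)) /\
  (fun k => limn_esup (fun n : nat =>
      ((n%:R)^-1 * supnorm (G n \- birk phi (Gk k) n))%:E)) @ \oo --> 0%E.

(* Main.v *)
Require Import Defs.
From HB Require Import structures.
From mathcomp Require Import all_boot all_order all_algebra.
From mathcomp Require Import all_classical all_reals all_analysis.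
Import Order.TTheory GRing.Theory Num.Theory.
Import numFieldNormedType.Exports.
Local Open Scope classical_set_scope.
Local Open Scope ring_scope.

Lemma borel_set_pre {T U : topologicalType} (h : T -> U) :
  continuous h -> forall B, borel_set B -> borel_set (h @^-1` B).
Proof.
move=> hc B; rewrite /borel_set.
have [S0 SC SU] := smallest_sigma_algebra setT (@open T).
suff : <<s open >> `<=` [set B | <<s open >> (h @^-1` B)] by apply.
apply: smallest_sub.
  split => /=.
  - by rewrite preimage_set0.
  - by move=> A HA; rewrite setTD -preimage_setC -setTD; apply: SC.
  - by move=> A HA; rewrite preimage_bigcup; apply: SU.
move=> A /= oA; apply: sub_gen_smallest.
by move: oA; apply: (proj1 (continuousP h)).
Qed.

Lemma supnorm_comp {R : realType} {T : Type} (f : T -> R) (h : T -> T) :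
  (forall y, exists x, h x = y) -> supnorm (f \o h) = supnorm f.
Proof.
move=> hs; rewrite /supnorm; congr sup; apply/seteqP; split => _ [x _ <-].
  by exists (h x).
by have [z <-] := hs x; exists z.
Qed.

Lemma transfer {R : realType} {T : topologicalType} (phi : T -> T)
  (G Gk G' Gk' : nat -> T -> R) (h : nat -> T -> T) :
  asymp_additive phi G Gk -> (forall n, continuous (h n)) ->
  (forall n y, exists x, h n x = y) ->
  (forall n, G' n = G n \o h n) -> (forall k, continuous (Gk' k)) ->
  (forall k n, birk phi (Gk' k) n = birk phi (Gk k) n \o h n) ->
  asymp_additive phi G' Gk'.
Proof.
move=> [HB [HC HL]] hc hs HG' HC' Hb; split; [|split] => //.
  move=> n; have [bf [c hcb]] := HB n; split.
    by move=> A mA; rewrite HG' comp_preimage; apply: borel_set_pre; [exact: hc|exact: bf].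
  by exists c => x; rewrite HG'; apply: hcb.
suff -> : (fun k => limn_esup (fun n : nat =>
      ((n%:R)^-1 * supnorm (G' n \- birk phi (Gk' k) n))%:E)) =
      (fun k => limn_esup (fun n : nat =>
      ((n%:R)^-1 * supnorm (G n \- birk phi (Gk k) n))%:E)) by [].
apply: funext => k; congr limn_esup; apply: funext => n.
rewrite HG' Hb; congr (_ * _)%:E; by rewrite -[RHS](supnorm_comp _ _ (hs n)).
Qed.

Lemma iter_cont {T : topologicalType} (f : T -> T) n :
  continuous f -> continuous (iter n f).
Proof.
move=> fc; elim: n => [|n IH] /= x; first exact: cvg_id.
exact: (continuous_comp (IH x) (fc _)).
Qed.

Theorem lemma3p6 (R : realType) (M : pseudoMetricType R)
  (hM : hausdorff_space M) (cM : compact [set: M])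
  (phi : M -> M) (phi_cont : continuous phi)
  (G Gk : nat -> M -> R) :
  asymp_additive phi G Gk ->
  (* case (C): theta_n = theta *)
  (forall theta : M -> M, homeomorphism theta -> theta \o theta = id ->
     phi = theta \o phi \o theta ->
     asymp_additive phi (fun n => G n \o theta) (fun k => Gk k \o theta)) /\
  (* case (R): phi homeomorphism with inverse phiinv; theta_n = theta o phi^(n-1) *)
  (forall (theta phiinv : M -> M), continuous phiinv ->
     cancel phi phiinv -> cancel phiinv phi ->
     homeomorphism theta -> theta \o theta = id ->
     phiinv = theta \o phi \o theta ->
     asymp_additive phi (fun n => G n \o (theta \o iter n.-1 phi))
                        (fun k => Gk k \o theta)).
Proof.
move=> HA; have [_ [HC _]] := HA; split.
  move=> theta [tc _] Htt Hphi.
  have tt y : theta (theta y) = y by exact: (congr1 (fun f => f y) Htt).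
  have com x : phi (theta x) = theta (phi x).
    by rewrite {1}Hphi /= tt.
  have comi j x : iter j phi (theta x) = theta (iter j phi x).
    by elim: j => //= j ->; rewrite com.
  apply: (@transfer _ _ phi G Gk _ _ (fun _ => theta) HA) => //.
  - by move=> _ y; exists (theta y); rewrite tt.
  - by move=> k; move=> x; apply: continuous_comp; [exact: tc|exact: HC].
  - move=> k n; apply: funext => x /=; rewrite /birk.
    by apply: eq_bigr => j _ /=; rewrite comi.
move=> theta phiinv pic pK piK [tc _] Htt Hphi.
have tt y : theta (theta y) = y by exact: (congr1 (fun f => f y) Htt).
have com x : theta (phi x) = phiinv (theta x) by rewrite Hphi /= tt.
have comi j x : theta (iter j phi x) = iter j phiinv (theta x).
  by elim: j => //= j <-; rewrite com.
have canc k w : iter k phi (iter k phiinv w) = w.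
  by elim: k w => //= k IH w; rewrite -iterS iterSr piK IH.
apply: (@transfer _ _ phi G Gk _ _ (fun n => theta \o iter n.-1 phi) HA) => //.
- by move=> n x; apply: continuous_comp; [exact: iter_cont|exact: tc].
- move=> n y; exists (iter n.-1 phiinv (theta y)) => /=.
  by rewrite canc tt.
- by move=> k x; apply: continuous_comp; [exact: tc|exact: HC].
- move=> k n; apply: funext => x /=; rewrite /birk.
  rewrite (reindex_inj rev_ord_inj) /=.
  apply: eq_bigr => j _ /=; rewrite comi comi.
  set z := theta x.
  have n0 : (0 < n)%N := leq_ltn_trans (leq0n j) (ltn_ord j).
  have hj : (j <= n.-1)%N by rewrite -ltnS prednK.
  have -> : (n - j.+1 = n.-1 - j)%N by rewrite -{1}(prednK n0) subSS.
  by rewrite -{2}(subnKC hj) iterD canc.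
Qed.
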